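(* For $\lambda,\mu,\nu\in\mathcal{A}_{k,n}$, $$N^\nu_{\lambda\mu}=\sum_{\boldsymbol{\nu}}c^{\boldsymbol{\nu}}_{\boldsymbol{\lambda}\boldsymbol{\mu}}\frac{f_{\boldsymbol{\nu}}}{f_{\boldsymbol{\lambda}}f_{\boldsymbol{\mu}}},$$ where the sum runs over all $n$-multipartitions $\boldsymbol{\nu}$ with $|\nu^{(i)}|=m_i(\nu)$ for $i=1,\dots,n$, and $\boldsymbol{\lambda},\boldsymbol{\mu}$ are any $n$-multipartitions with $|\lambda^{(i)}|=m_i(\lambda)$ and $|\mu^{(i)}|=m_i(\mu)$ for all $i$.
   Context: Fix $k,n\ge1$ and a primitive $n$-th root of unity $\zeta$. $\mathcal{A}_{k,n}$ is the set of integer vectors $\lambda=(\lambda_1,\dots,\lambda_k)$ with $n\ge\lambda_1\ge\cdots\ge\lambda_k>0$; $m_i(\lambda)$ is the multiplicity of $i$, $|\lambda|=\sum\lambda_i$; $S_\lambda$ is its stabiliser in $S_k$ under $\lambda\circ w=(\lambda_{w(1)},\dots,\lambda_{w(k)})$ and $S^\lambda$ the minimal length representatives of $S_\lambda\backslash S_k$. $N^\nu_{\lambda\mu}=\#\{(w,w')\in S^\lambda\times S^\mu:\lambda\circ w+\mu\circ w'=(\nu_i+n\alpha_i)_{i=1}^k\text{ for some }\alpha\in\mathbb{Z}^k,\ \sum\alpha_i=(|\lambda|+|\mu|-|\nu|)/n\}$. The generalised symmetric group is $S(n,k)=\mathcal{C}_n^{\times k}\rtimes S_k$ ($\mathcal{C}_n$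 cyclic of order $n$); $y_i$ denotes the generator of the $i$-th copy of $\mathcal{C}_n$ and $y^\alpha=y_1^{\alpha_1}\cdots y_k^{\alpha_k}$. An $n$-multipartition of $k$ is $\boldsymbol{\lambda}=(\lambda^{(1)},\dots,\lambda^{(n)})$ with $\sum|\lambda^{(i)}|=k$; $f_{\boldsymbol{\lambda}}=\prod_if_{\lambda^{(i)}}$ with $f_{\lambda^{(i)}}$ the number of standard Young tableaux of shape $\lambda^{(i)}$. The simple $S(n,k)$-modules $\mathcal{L}(\boldsymbol{\lambda})$ are labelled by $n$-multipartitions of $k$ so that $\operatorname{Tr}_{\mathcal{L}(\boldsymbol{\lambda})}y^\alpha=f_{\boldsymbol{\lambda}}\,m_\lambda(\zeta^\alpha)$ for all $\alpha\in\mathbb{Z}_n^{k}$, where $\lambda\in\mathcal{A}_{k,n}$ is the unique element with $m_i(\lambda)=|\lambda^{(i)}|$ and $m_\lambda(\zeta^\alpha)$ is the monomial symmetric polynomial evaluated at $(\zeta^{\alpha_1},\dots,\zeta^{\alpha_k})$. $c^{\boldsymbol{\nu}}_{\boldsymbol{\lambda}\boldsymbol{\mu}}$ are the structure constants of the representation ring: $\mathcal{L}(\boldsymbol{\lambda})\otimes\mathcal{L}(\boldsymbol{\mu})\cong\bigoplus_{\boldsymbol{\nu}}\mathcal{L}(\boldsymbol{\nu})^{\oplus c^{\boldsymbol{\nu}}_{\boldsymbol{\lambda}\boldsymbol{\mu}}}$. *)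

(* Defs.v *)
From Stdlib Require Import ClassicalEpsilon.
From HB Require Import structures.
From mathcomp Require Import all_boot all_order all_algebra all_fingroup.
From mathcomp Require Import all_solvable all_field all_character.
Set Implicit Arguments. Unset Strict Implicit. Unset Printing Implicit Defensive.
Import Order.TTheory GRing.Theory Num.Theory.
Local Open Scope ring_scope.

Definition bool_of (P : Prop) : bool :=
  if excluded_middle_informative P then true else false.

Definition inA (k n : nat) (lam : k.-tuple nat) : bool :=
  sorted geq lam && all (fun x => (0 < x <= n)%N) lam.

Definition tact (k : nat) (lam : k.-tuple nat) (w : 'S_k) : k.-tuple nat :=
  [tuple tnth lam (w j) | j < k].

(* Coxeter length of w in S_k = number of inversions *)
Definition plen (k : nat) (w : 'S_k) : nat :=
  #|[set p : 'I_k * 'I_k | (p.1 < p.2)%N && (w p.2 < w p.1)%N]|.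

(* w in S^lambda: w has minimal length in its coset S_lambda w
   (the coset S_lambda w is {v | lambda o v = lambda o w}) *)
Definition minrep (k : nat) (lam : k.-tuple nat) (w : 'S_k) : bool :=
  [forall v : 'S_k, (tact lam v == tact lam w) ==> (plen w <= plen v)%N].

Definition Ncoef (k n : nat) (lam mu nu : k.-tuple nat) : nat :=
  #|[set p : 'S_k * 'S_k | minrep lam p.1 && minrep mu p.2 &&
     bool_of (exists alpha : 'I_k -> int,
       (forall i : 'I_k,
          ((tnth (tact lam p.1) i + tnth (tact mu p.2) i)%N%:Z
            = (tnth nu i)%:Z + (n%:Z * alpha i)))
       /\ ((\sum_(i < k) alpha i)%:~R : rat)
            = ((sumn lam + sumn mu)%N%:Z - (sumn nu)%:Z)%:~R / n%:R)]|.

Definition monsym (R : nzRingType) (k : nat) (lam : k.-tuple nat) (x : 'I_k -> R) : R :=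
  \sum_(b <- undup [seq tact lam w | w <- enum 'S_k]) \prod_(j < k) x j ^+ tnth b j.

(* cell (r, c) (0-based) belongs to the Young diagram of p *)
Definition in_shape (p : seq nat) (x : nat * nat) : bool := (x.2 < nth 0%N p x.1)%N.

(* T : cells -> {1..m} (value 0 used outside the diagram) is a standard
   Young tableau of shape p, where m = |p| *)
Definition is_syt (p : seq nat) (m : nat) (T : {ffun 'I_m * 'I_m -> 'I_m.+1}) : bool :=
  [forall x : 'I_m * 'I_m, in_shape p (val x.1, val x.2) == (0 < T x)%N] &&
  [forall x : 'I_m * 'I_m, forall y : 'I_m * 'I_m,
     [&& in_shape p (val x.1, val x.2), in_shape p (val y.1, val y.2) & T x == T y]
       ==> (x == y)] &&
  [forall x : 'I_m * 'I_m, forall y : 'I_m * 'I_m,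
     (in_shape p (val x.1, val x.2) && in_shape p (val y.1, val y.2)) ==>
     (((x.1 == y.1) && (x.2 < y.2)%N) ==> (T x < T y)%N) &&
     (((x.2 == y.2) && (x.1 < y.1)%N) ==> (T x < T y)%N)].

Definition nsyt (p : seq nat) : nat :=
  #|[set T : {ffun 'I_(sumn p) * 'I_(sumn p) -> 'I_(sumn p).+1} | is_syt p T]|.

(* n-tuples of partitions with at most k parts, each part <= k, encoded as
   k-tuples padded with zeros *)
Definition mpart (k n : nat) := {ffun 'I_n -> k.-tuple 'I_k.+1}.

Definition part_of (k : nat) (t : k.-tuple 'I_k.+1) : seq nat := map val t.

Definition is_part (k : nat) (t : k.-tuple 'I_k.+1) : bool := sorted geq (part_of t).

Definition psize (k : nat) (t : k.-tuple 'I_k.+1) : nat := sumn (part_of t).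

Definition is_mpart (k n : nat) (b : mpart k n) : bool :=
  [forall i, is_part (b i)] && ((\sum_(i < n) psize (b i))%N == k).

Definition fmp (k n : nat) (b : mpart k n) : nat := (\prod_(i < n) nsyt (part_of (b i)))%N.

(* |lambda^(i)| = m_i(lam) for i = 1..n  (component index i : 'I_n stands for i+1) *)
Definition mp_type (k n : nat) (b : mpart k n) (lam : k.-tuple nat) : Prop :=
  forall i : 'I_n, psize (b i) = count_mem i.+1 lam.

(* realised as the wreath product C_n wr S_k acting on 'I_n * 'I_k:
   (a, j) |-> (a + alpha_j mod n, w j) *)
Definition wreath_set (n k : nat) : {set {perm 'I_n * 'I_k}} :=
  [set g : {perm 'I_n * 'I_k} | [exists alpha : {ffun 'I_k -> 'I_n}, exists w : 'S_k,
     [forall x : 'I_n * 'I_k,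
        (val (g x).1 == (val x.1 + val (alpha x.2)) %% n)%N && ((g x).2 == w x.2)]]].

Definition SG (n k : nat) : {group {perm 'I_n * 'I_k}} := <<wreath_set n k>>%G.

Definition is_yalpha (n k : nat) (alpha : 'I_k -> 'I_n) (g : {perm 'I_n * 'I_k}) : Prop :=
  forall x : 'I_n * 'I_k, val (g x).1 = ((val x.1 + val (alpha x.2)) %% n)%N /\ (g x).2 = x.2.

Definition cstr (gT : finGroupType) (G : {group gT}) (i j l : Iirr G) : algC :=
  '['chi_i * 'chi_j, 'chi_l].

(* Main.v *)
Require Import Defs.
From Stdlib Require Import ClassicalEpsilon.
From HB Require Import structures.
From mathcomp Require Import all_boot all_order all_algebra all_fingroup.
From mathcomp Require Import all_solvable all_field all_character.
From mathcomp Require Import zify ring.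
Import Order.TTheory GRing.Theory Num.Theory.
Set Implicit Arguments. Unset Strict Implicit.

Section Comb.
Variable k : nat.

Lemma tactE (lam : k.-tuple nat) w j : tnth (tact lam w) j = tnth lam (w j).
Proof. by rewrite /tact tnth_map tnth_ord_tuple. Qed.

Lemma card_ltset (m : nat) : (m <= k)%N -> #|[set i : 'I_k | (i < m)%N]| = m.
Proof.
move=> mk.
have -> : [set i : 'I_k | (i < m)%N] = (widen_ord mk) @: [set: 'I_m].
  apply/setP=> i; rewrite inE; apply/idP/imsetP.
    by move=> im; exists (Ordinal im); rewrite ?inE //; apply/val_inj.
  by case=> j _ ->; rewrite /= ltn_ord.
rewrite card_imset ?cardsT ?card_ord //; by move=> a b /(congr1 val) /= ab; apply: val_inj.
Qed.

Lemma perm_tact (lam : k.-tuple nat) w : perm_eq (tact lam w) lam.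
Proof.
rewrite /tact /=.
have -> : [seq tnth lam (w j) | j <- enum 'I_k] = map (tnth lam) (map w (enum 'I_k)).
  by elim: (enum 'I_k) => //= ? ? ->.
rewrite -[X in perm_eq _ X](map_tnth_enum lam); apply: perm_map.
apply: uniq_perm; first by rewrite (map_inj_uniq (@perm_inj _ w)) enum_uniq.
  exact: enum_uniq.
move=> x; rewrite mem_enum; apply/mapP; exists (w^-1 x)%g; rewrite ?mem_enum ?permKV //.
Qed.

Definition prec (rho : k.-tuple nat) (p j : 'I_k) : bool :=
  (tnth rho j < tnth rho p)%N || ((tnth rho p == tnth rho j) && (p < j)%N).

Definition rk rho j := #|[set p | prec rho p j]|.

Definition mono rho (w : 'S_k) := forall p j, prec rho p j -> (w p < w j)%N.

Lemma prec_irr rho p : prec rho p p = false.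
Proof. by rewrite /prec ltnn eqxx ltnn. Qed.

Lemma prec_trans rho p q j : prec rho p q -> prec rho q j -> prec rho p j.
Proof.
rewrite /prec; move: (tnth rho p) (tnth rho q) (tnth rho j) => a b c.
case/orP=> [h1|/andP[/eqP h1 h2]]; case/orP=> [h3|/andP[/eqP h3 h4]]; apply/orP.
- by left; lia.
- by left; lia.
- by left; lia.
- by right; apply/andP; split; [apply/eqP; lia| lia].
Qed.

Lemma prec_total rho p j : p != j -> prec rho p j || prec rho j p.
Proof.
rewrite /prec -(inj_eq val_inj) /= => pj.
move: (tnth rho p) (tnth rho j) => a b.
case: (ltngtP a b) => ab; rewrite ?orbT //=.
rewrite ?ab ?eqxx /= ?orbF; case: (ltngtP p j) pj => //; rewrite ?orbT //.
Qed.

Lemma rk_lt rho p j : prec rho p j -> (rk rho p < rk rho j)%N.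
Proof.
move=> h; apply: proper_card; apply/properP; split.
  by apply/subsetP=> q; rewrite !inE => hq; apply: prec_trans h.
by exists p; rewrite !inE ?prec_irr.
Qed.

Lemma rk_ltk rho j : (rk rho j < k)%N.
Proof.
rewrite -[k in (_ < k)%N]card_ord -cardsT; apply: proper_card; apply/properP; split.
  exact: subsetT.
by exists j; rewrite !inE ?prec_irr.
Qed.

Lemma mono_rk rho w : mono rho w -> forall j, val (w j) = rk rho j.
Proof.
move=> m j; rewrite /rk.
have -> : [set p | prec rho p j] = w @^-1: [set i : 'I_k | (i < w j)%N].
  apply/setP=> p; rewrite !inE; apply/idP/idP; first exact: m.
  move=> h; case: (eqVneq p j) => [pj|pj]; first by rewrite pj ltnn in h.
  case/orP: (prec_total rho pj) => // /m; lia.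
by rewrite card_preimset ?card_ltset //; [apply: ltnW | apply: perm_inj].
Qed.

Lemma mono_uniq rho w w' : mono rho w -> mono rho w' -> w = w'.
Proof.
move=> m m'; apply/permP=> j; apply/val_inj; by rewrite (mono_rk m) (mono_rk m').
Qed.

End Comb.

Section Lam.
Variable k : nat.
Variable lam : k.-tuple nat.
Hypothesis slam : sorted geq lam.

Lemma lam_anti (i j : 'I_k) : (i <= j)%N -> (tnth lam j <= tnth lam i)%N.
Proof.
move=> ij; rewrite !(tnth_nth 0%N).
have tr : transitive geq by move=> a b c h1 h2; apply: leq_trans h2 h1.
have := @sorted_leq_nth _ geq tr (@leqnn) 0%N lam slam i j.
by rewrite !inE !size_tuple !ltn_ord; apply.
Qed.

Lemma lam_lt (i j : 'I_k) : (tnth lam i < tnth lam j)%N -> (j < i)%N.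
Proof. by move=> h; rewrite ltnNge; apply/negP => /lam_anti; lia. Qed.

Definition Eset (w : 'S_k) := [set p : 'I_k * 'I_k | (p.1 < p.2)%N && (w p.2 < w p.1)%N &&
   (tnth lam (w p.1) == tnth lam (w p.2))].
Definition Dset (rho : k.-tuple nat) := [set p : 'I_k * 'I_k | (p.1 < p.2)%N &&
   (tnth rho p.1 < tnth rho p.2)%N].

Lemma plen_split w : plen w = (#|Dset (tact lam w)| + #|Eset w|)%N.
Proof.
rewrite /plen -(cardsID [set p : 'I_k * 'I_k | tnth lam (w p.1) == tnth lam (w p.2)]) addnC.
congr (_ + _)%N; apply: eq_card => p; rewrite !inE ?tactE.
  case: (p.1 < p.2)%N => /=; last by rewrite andbF.
  case: (ltnP (w p.2) (w p.1)) => h /=.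
    by have := lam_anti (ltnW h); rewrite ltn_neqAle => ->; rewrite andbT.
  by have := lam_anti h; rewrite andbF ltnNge => ->.
by [].
Qed.

Lemma E0_mono w : #|Eset w| = 0%N -> mono (tact lam w) w.
Proof.
move=> /eqP; rewrite cards_eq0 => /eqP E0 p j; rewrite /prec !tactE.
case/orP=> [/lam_lt //|/andP[/eqP e pj]].
have : (p, j) \notin Eset w by rewrite E0 inE.
rewrite inE /= pj e eqxx /= andbT -leqNgt leq_eqVlt => /orP[/eqP|//].
move/val_inj/perm_inj=> jp; by rewrite jp ltnn in pj.
Qed.

Lemma mono_E0 w : mono (tact lam w) w -> #|Eset w| = 0%N.
Proof.
move=> m; apply/eqP; rewrite cards_eq0; apply/eqP/setP=> [[p j]]; rewrite !inE /=.
apply/negP=> /andP[/andP[pj jp] e].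
have : prec (tact lam w) p j by rewrite /prec !tactE e pj orbT.
by move/m; lia.
Qed.

Lemma exists_mono w : exists v : 'S_k, tact lam v = tact lam w /\ mono (tact lam w) v.
Proof.
set rho := tact lam w.
pose f (j : 'I_k) : 'I_k := Ordinal (rk_ltk rho j).
have finj : injective f.
  move=> p j /(congr1 val) /= e; apply/eqP; apply/negP=> /negP pj.
  case/orP: (prec_total rho pj) => /rk_lt; lia.
pose v := perm finj.
have mv : mono rho v by move=> p j /rk_lt; rewrite !permE.
exists v; split => //.
pose tau := tact rho (v^-1)%g.
have taueq : tau = lam.
  apply/val_inj/(@sorted_eq _ geq).
  - by move=> a b c h1 h2; apply: leq_trans h2 h1.
  - by move=> a b /andP[h1 h2]; apply: anti_leq; apply/andP; split.
  - apply/(sortedP 0%N)=> i; rewrite size_tuple => hi.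
    have hi0 : (i < k)%N by lia.
    rewrite -(tnth_nth 0%N tau (Ordinal hi0)) -(tnth_nth 0%N tau (Ordinal hi)) !(tactE rho).
    set p := (v^-1 _)%g; set q := (v^-1 _)%g.
    change (tnth rho q <= tnth rho p)%N.
    have pq : p != q.
      by apply/negP=> /eqP/perm_inj/(congr1 val) /=; apply: n_Sn.
    case/orP: (prec_total rho pq) => h.
      by move: h; rewrite /prec; case/orP; [lia | case/andP=> /eqP -> _].
    move/mv: h; rewrite /p /q !permKV /=; lia.
  - exact: slam.
  - exact: perm_trans (perm_tact _ _) (perm_tact _ _).
apply: eq_from_tnth => j; rewrite tactE -taueq tactE permK //.
Qed.

Lemma minrep_mono w : minrep lam w <-> mono (tact lam w) w.
Proof.
split.
  move/forallP=> h; have [v [ev mv]] := exists_mono w.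
  have := h v; rewrite ev eqxx /= (plen_split w) (plen_split v) ev.
  rewrite (@mono_E0 v) ?ev // addn0 => le; apply: E0_mono; lia.
move=> m; apply/forallP=> v; apply/implyP=> /eqP ev.
rewrite (plen_split w) (plen_split v) ev mono_E0 //; lia.
Qed.

Lemma minrep_big (R : Type) (idx : R) (op : Monoid.com_law idx) (F : k.-tuple nat -> R) :
  \big[op/idx]_(w | minrep lam w) F (tact lam w) =
  \big[op/idx]_(b <- undup [seq tact lam w | w <- enum 'S_k]) F b.
Proof.
rewrite -(big_enum _ _ [pred w | minrep lam w]) /= -(big_map (tact lam) xpredT).
apply: perm_big; apply: uniq_perm; last 2 first.
- exact: undup_uniq.
- move=> x; rewrite mem_undup; apply/mapP/mapP.
    by case=> w _ ->; exists w; rewrite ?mem_enum.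
  case=> w _ ->; have [v [ev mv]] := exists_mono w.
  by exists v => //; rewrite mem_enum inE minrep_mono ev.
rewrite map_inj_in_uniq ?enum_uniq // => a b; rewrite !mem_enum !inE.
move=> /minrep_mono ma /minrep_mono mb e; rewrite e in ma; exact: mono_uniq ma mb.
Qed.

End Lam.
Local Open Scope ring_scope.

Lemma bool_ofP (P : Prop) : reflect P (bool_of P).
Proof. by rewrite /bool_of; case: excluded_middle_informative => h; constructor. Qed.

Definition Rs k (lam : k.-tuple nat) := undup [seq tact lam w | w <- enum 'S_k].

Definition condb k n (nu b c : k.-tuple nat) : bool :=
  [forall j, n %| tnth b j + tnth c j + (n - tnth nu j)]%N.

Lemma sum_tuple_int k (t : k.-tuple nat) : (\sum_(j < k) (tnth t j)%:Z)%R = (sumn t)%:Z.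
Proof.
rewrite sumnE big_tuple.
have := @sumMz int _ (enum 'I_k) xpredT (fun j => tnth t j).
rewrite !intz /= !big_enum /= => ->; apply: eq_bigr => i _; by rewrite intz.
Qed.

Section NC.
Variables (k n : nat) (hn : (0 < n)%N) (lam mu nu : k.-tuple nat).
Hypotheses (hlam : inA n lam) (hmu : inA n mu) (hnu : inA n nu).

Lemma nu_le j : (tnth nu j <= n)%N.
Proof.
move: hnu => /andP[_ /allP h]; have := h (tnth nu j) (mem_tnth _ _).
by case/andP.
Qed.

Lemma cond_equiv (w w' : 'S_k) :
  bool_of (exists alpha : 'I_k -> int,
       (forall i : 'I_k,
          ((tnth (tact lam w) i + tnth (tact mu w') i)%N%:Z
            = (tnth nu i)%:Z + (n%:Z * alpha i)))
       /\ ((\sum_(i < k) alpha i)%:~R : rat)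
            = ((sumn lam + sumn mu)%N%:Z - (sumn nu)%:Z)%:~R / n%:R)
  = condb n nu (tact lam w) (tact mu w').
Proof.
apply/bool_ofP/forallP.
  case=> alpha [h _] j; have := h j; have := nu_le j.
  move: (tnth (tact lam w) j) (tnth (tact mu w') j) (tnth nu j) (alpha j) => a b c d cn e.
  have key : (a + b + (n - c))%N%:Z = n%:Z * (d + 1).
    rewrite mulrDr mulr1; move: e; move: (n%:Z * d) => x; lia.
  change ((n%:Z %| (a + b + (n - c))%N%:Z)%Z); rewrite key.
  apply: dvdz_mulr; exact: dvdzz.
move=> h.
pose alpha j := ((tnth (tact lam w) j + tnth (tact mu w') j + (n - tnth nu j)) %/ n)%N%:Z - 1.
have ha : forall j, ((tnth (tact lam w) j + tnth (tact mu w') j)%N%:Z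
            = (tnth nu j)%:Z + (n%:Z * alpha j)).
  move=> j; rewrite /alpha; have := divnK (h j); have := nu_le j.
  move: (tnth (tact lam w) j) (tnth (tact mu w') j) (tnth nu j) => a b c cn.
  move: ((a + b + (n - c)) %/ n)%N => q e.
  rewrite mulrBr mulr1 -PoszM mulnC e; lia.
exists alpha; split => //.
have sa : (n%:Z * \sum_(i < k) alpha i = (sumn lam + sumn mu)%N%:Z - (sumn nu)%:Z)%R.
  rewrite mulr_sumr.
  have -> : (\sum_(i < k) n%:Z * alpha i = \sum_(i < k) ((tnth (tact lam w) i)%:Z +
      (tnth (tact mu w') i)%:Z - (tnth nu i)%:Z))%R.
    by apply: eq_bigr => i _; rewrite -PoszD ha; lia.
  rewrite big_split /= big_split /= sumrN !sum_tuple_int.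
  rewrite !(perm_sumn (perm_tact _ _)) PoszD.
  done.
have n0 : (n%:R : rat) != 0 by rewrite pnatr_eq0 -lt0n.
by rewrite -sa intrM mulrAC (mulfV n0) mul1r.
Qed.

Lemma Ncoef_sum : Ncoef n lam mu nu =
  (\sum_(b <- Rs lam) \sum_(c <- Rs mu) condb n nu b c)%N.
Proof.
rewrite /Ncoef -sum1_card.
have sl : sorted geq lam by case/andP: hlam.
have sm : sorted geq mu by case/andP: hmu.
rewrite /Rs.
under [in RHS]eq_bigr => b _ do rewrite -(minrep_big sm).
rewrite -(minrep_big sl) /=.
rewrite [in RHS]pair_big /= big_mkcond [in RHS]big_mkcond /=.
apply: eq_bigr => p _; rewrite inE cond_equiv.
by case: (minrep lam p.1 && minrep mu p.2); case: condb.
Qed.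

End NC.

Section Alg.
Variables (k n : nat) (hn : (0 < n)%N) (zeta : algC) (hzeta : n.-primitive_root zeta).

Lemma geom e : \sum_(a < n) zeta ^+ (a * e) = if (n %| e)%N then n%:R else 0.
Proof.
under eq_bigr => a _ do rewrite mulnC exprM.
rewrite (prim_order_dvd hzeta); case: eqP => [->|z1].
  by under eq_bigr do rewrite expr1n; rewrite sumr_const card_ord.
have : (zeta ^+ e) ^+ n == 1 by rewrite -exprM mulnC exprM (prim_expr_order hzeta) expr1n.
have [m nm] : exists m, n = m.+1 by exists n.-1; rewrite prednK.
rewrite nm expfS_eq1 -nm => /orP[/eqP //|/eqP -> //].
Qed.

Lemma bigS (e : 'I_k -> nat) :
  \sum_(al : {ffun 'I_k -> 'I_n}) \prod_(j < k) zeta ^+ (al j * e j) =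
  if [forall j, n %| e j]%N then n%:R ^+ k else 0.
Proof.
rewrite -(bigA_distr_bigA (fun (j : 'I_k) (a : 'I_n) => zeta ^+ (a * e j))) /=.
under eq_bigr => j _ do rewrite geom.
case: forallP => h.
  under eq_bigr => j _ do rewrite h.
  by rewrite prodr_const card_ord.
have [j hj] : exists j, ~~ (n %| e j)%N.
  by apply/existsP; rewrite -negb_forall; apply/forallP.
by rewrite (bigD1 j) //= (negbTE hj) mul0r.
Qed.

End Alg.

Section Ty.
Variables (k n : nat).

Lemma geq_tr : transitive geq.
Proof. by move=> a b c h1 h2; apply: leq_trans h2 h1. Qed.
Lemma geq_anti : antisymmetric geq.
Proof. by move=> a b /andP[h1 h2]; apply: anti_leq; apply/andP; split. Qed.
Lemma geq_tot : total geq.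
Proof. by move=> a b; apply: leq_total. Qed.

Definition tyseq (b : mpart k n) : seq nat :=
  sort geq (flatten [seq nseq (psize (b i)) i.+1 | i <- enum 'I_n]).

Definition ty (b : mpart k n) : k.-tuple nat := insubd (nseq_tuple k 0%N) (tyseq b).

Lemma count_tyseq b (i : 'I_n) : count_mem i.+1 (tyseq b) = psize (b i).
Proof.
rewrite /tyseq.
have hp : forall s : seq nat, perm_eq (sort geq s) s by move=> s; rewrite perm_sort.
rewrite (seq.permP (hp _)) count_flatten -map_comp.
rewrite sumnE big_map big_enum /= (bigD1 i) //= count_nseq /= eqxx mul1n big1 ?addn0 //.
move=> j ji; rewrite count_nseq /= eqSS; case: eqP => //= e.
by move: ji; rewrite (_ : j = i) ?eqxx //; apply: val_inj.
Qed.

Lemma size_tyseq b : is_mpart b -> size (tyseq b) = k.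
Proof.
case/andP=> _ /eqP <-; rewrite /tyseq size_sort size_flatten /shape -map_comp sumnE big_map big_enum /=.
by apply: eq_bigr => i _; rewrite /= size_nseq.
Qed.

Lemma ty_val b : is_mpart b -> val (ty b) = tyseq b.
Proof. by move=> h; rewrite /ty insubdK //; apply/eqP; rewrite size_tyseq. Qed.

Lemma ty_ok b : is_mpart b -> inA n (ty b) /\ mp_type b (ty b).
Proof.
move=> h; split; last by move=> i; rewrite ty_val // count_tyseq.
rewrite /inA ty_val // /tyseq sort_sorted ?geq_tot //=; apply/allP=> x.
rewrite mem_sort => /flattenP[s /mapP[i _ ->]] /nseqP[-> _].
by rewrite ltn_ord.
Qed.

Lemma inA_mem (lam : k.-tuple nat) x : inA n lam -> x \in lam -> (0 < x <= n)%N.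
Proof. by case/andP=> _ /allP; apply. Qed.

Lemma type_uniq (b : mpart k n) (l1 l2 : k.-tuple nat) : inA n l1 -> inA n l2 ->
  mp_type b l1 -> mp_type b l2 -> l1 = l2.
Proof.
move=> h1 h2 t1 t2; apply/val_inj/(sorted_eq geq_tr geq_anti).
- by case/andP: h1.
- by case/andP: h2.
apply/allP=> x hx.
have : (0 < x <= n)%N by move: hx; rewrite mem_cat => /orP[/(inA_mem h1)|/(inA_mem h2)].
case/andP=> x0 xn.
have hx' : (x.-1 < n)%N by lia.
have xe : x = (Ordinal hx').+1 by rewrite /= prednK.
by rewrite /= xe -t1 -t2.
Qed.

Lemma tact1 (lam : k.-tuple nat) : tact lam 1%g = lam.
Proof. by apply: eq_from_tnth => j; rewrite tactE perm1. Qed.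

Lemma mem_Rs (rho nu : k.-tuple nat) : inA n rho -> inA n nu -> (nu \in Rs rho) = (rho == nu).
Proof.
move=> hr hn'; apply/idP/eqP.
  rewrite mem_undup => /mapP[w _ e]; apply/val_inj/(sorted_eq geq_tr geq_anti).
  - by case/andP: hr.
  - by case/andP: hn'.
  - by rewrite e perm_sym perm_tact.
move=> <-; rewrite mem_undup; apply/mapP; exists 1%g; rewrite ?mem_enum ?tact1 //.
Qed.

Lemma Rs_mem (rho b : k.-tuple nat) j : inA n rho -> b \in Rs rho -> (0 < tnth b j <= n)%N.
Proof.
move=> hr; rewrite mem_undup => /mapP[w _ ->]; apply: (inA_mem hr).
by rewrite -(perm_mem (perm_tact rho w)) mem_tnth.
Qed.

End Ty.

Lemma dvd_eq n b v : (0 < b <= n)%N -> (0 < v <= n)%N -> (n %| b + (n - v))%N = (b == v).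
Proof.
move=> hb hv; apply/idP/eqP; last by move=> ->; rewrite subnKC ?dvdnn //; lia.
case/dvdnP=> q e.
have q1 : q = 1%N.
  have h1 : (0 < q * n)%N by rewrite -e; lia.
  have h2 : (q * n < 2 * n)%N by rewrite -e; lia.
  rewrite ltn_pmul2r in h2; last by lia.
  by rewrite muln_gt0 in h1; lia.
by move: e; rewrite q1 mul1n; lia.
Qed.

Lemma sum_eq_count (T : eqType) (s : seq T) x :
  (\sum_(b <- s) ((b == x) : nat))%N = count_mem x s.
Proof. by elim: s => [|y s IH]; rewrite ?big_nil ?big_cons //= IH. Qed.

Section Sums.
Variables (k n : nat) (hn : (0 < n)%N) (zeta : algC) (hzeta : n.-primitive_root zeta).
Variables (nu : k.-tuple nat) (hnu : inA n nu).

Definition W (al : {ffun 'I_k -> 'I_n}) := \prod_(j < k) zeta ^+ (al j * (n - tnth nu j)).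

Lemma monsym_prod (rho : k.-tuple nat) (al : 'I_k -> 'I_n) :
  monsym rho (fun j => zeta ^+ al j) = \sum_(b <- Rs rho) \prod_(j < k) zeta ^+ (al j * tnth b j).
Proof.
by rewrite /monsym; apply: eq_bigr => b _; apply: eq_bigr => j _; rewrite exprM.
Qed.

Lemma S1 (rho : k.-tuple nat) : inA n rho ->
  \sum_(al : {ffun 'I_k -> 'I_n}) monsym rho (fun j => zeta ^+ al j) * W al =
  (rho == nu)%:R * n%:R ^+ k.
Proof.
move=> hr.
under eq_bigr => al _ do rewrite monsym_prod mulr_suml.
rewrite exchange_big /=.
under eq_bigr => b _ do (under eq_bigr => al _ do rewrite /W -big_split /=).
under eq_bigr => b _ do (under eq_bigr => al _ do (under eq_bigr => j _ do rewrite -exprD -mulnDr)).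
under eq_bigr => b _ do rewrite (bigS hn hzeta (fun j => tnth b j + (n - tnth nu j))%N).
rewrite (eq_big_seq (fun b => (b == nu)%:R * n%:R ^+ k)).
  by rewrite -mulr_suml -natr_sum sum_eq_count count_uniq_mem ?undup_uniq // (mem_Rs hr hnu).
move=> b hb /=.
have -> : [forall j, n %| tnth b j + (n - tnth nu j)]%N = (b == nu).
  have hv : forall j, (0 < tnth nu j <= n)%N by move=> j; apply: (inA_mem hnu (mem_tnth _ _)).
  apply/forallP/eqP => [h|-> j]; first last.
    by rewrite dvd_eq ?eqxx ?hv.
  apply: eq_from_tnth => j; apply/eqP; rewrite -(@dvd_eq n) ?h ?hv //.
  exact: (Rs_mem _ hr).
by case: (b == nu); rewrite ?mul1r ?mul0r.
Qed.

Lemma S2 (lam mu : k.-tuple nat) :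
  \sum_(al : {ffun 'I_k -> 'I_n})
     (monsym lam (fun j => zeta ^+ al j) * monsym mu (fun j => zeta ^+ al j)) * W al =
  (\sum_(b <- Rs lam) \sum_(c <- Rs mu) condb n nu b c)%N%:R * n%:R ^+ k.
Proof.
under [in LHS]eq_bigr => al _ do rewrite !monsym_prod big_distrlr mulr_suml.
under [in LHS]eq_bigr => al _ do (under eq_bigr => b _ do rewrite mulr_suml).
rewrite [in LHS]exchange_big /=.
under [in LHS]eq_bigr => b _ do rewrite exchange_big /=.
under [in LHS]eq_bigr => b _ do (under eq_bigr => c _ do (under eq_bigr => al _ do rewrite /W -!big_split /=)).
under [in LHS]eq_bigr => b _ do (under eq_bigr => c _ do (under eq_bigr => al _ do (under eq_bigr => j _ do rewrite -!exprD -!mulnDr))).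
under [in LHS]eq_bigr => b _ do (under eq_bigr => c _ do rewrite (bigS hn hzeta (fun j => tnth b j + tnth c j + (n - tnth nu j))%N)).
rewrite natr_sum mulr_suml; apply: eq_bigr => b _.
rewrite natr_sum mulr_suml; apply: eq_bigr => c _.
rewrite /condb; case: forallP => _; by rewrite ?mul1r ?mul0r.
Qed.

End Sums.

Unset Implicit Arguments.
Set Strict Implicit.

Theorem mainTheorem11 (k n : nat) (hk : (0 < k)%N) (hn : (0 < n)%N)
  (zeta : algC) (hzeta : n.-primitive_root zeta)
  (L : mpart k n -> Iirr (SG n k))
  (L_inj : {in [pred b | is_mpart b] &, injective L})
  (L_surj : forall i : Iirr (SG n k), exists2 b, is_mpart b & L b = i)
  (L_trace : forall b : mpart k n, is_mpart b ->
     forall lam : k.-tuple nat, inA n lam -> mp_type b lam ->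
     forall (alpha : 'I_k -> 'I_n) (g : {perm 'I_n * 'I_k}), is_yalpha alpha g ->
       'chi_(L b) g = (fmp b)%:R * monsym lam (fun j => zeta ^+ alpha j))
  (lam mu nu : k.-tuple nat) (hlam : inA n lam) (hmu : inA n mu) (hnu : inA n nu)
  (blam bmu : mpart k n) (hblam : is_mpart blam) (hbmu : is_mpart bmu)
  (tlam : mp_type blam lam) (tmu : mp_type bmu mu) :
  (Ncoef n lam mu nu)%:R =
    \sum_(bnu : mpart k n | is_mpart bnu && bool_of (mp_type bnu nu))
       cstr (L blam) (L bmu) (L bnu) * (fmp bnu)%:R / ((fmp blam)%:R * (fmp bmu)%:R).
Proof.
have fnz : forall b : mpart k n, is_mpart b -> forall l : k.-tuple nat, inA n l -> mp_type b l -> (fmp b)%:R != 0 :> algC.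
  move=> b hb l hl tl; apply/eqP => f0.
  have hy : is_yalpha (fun _ : 'I_k => Ordinal hn) 1%g.
    by move=> x; rewrite perm1 /= addn0 modn_small.
  have := L_trace b hb l hl tl _ _ hy; rewrite f0 mul0r => e.
  by move: (irr1_neq0 (L b)); rewrite e eqxx.
have yex : forall al : 'I_k -> 'I_n, exists g, is_yalpha al g.
  move=> al.
  have finj : injective (fun x : 'I_n * 'I_k => (Ordinal (ltn_pmod (x.1 + al x.2) hn), x.2)).
    move=> [a j] [a' j'] /= [e1 e2]; subst j'; move: e1 => /= e1.
    congr (_, _); apply/val_inj => /=.
    move/eqP: e1; rewrite eqn_modDr !modn_small //; by move/eqP.
  by exists (perm finj) => x; rewrite permE.
set D := (fmp blam)%:R * (fmp bmu)%:R : algC.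
set c := fun b => cstr (L blam) (L bmu) (L b).
have key : forall al : {ffun 'I_k -> 'I_n},
  ((fmp blam)%:R * monsym lam (fun j => zeta ^+ al j)) *
  ((fmp bmu)%:R * monsym mu (fun j => zeta ^+ al j))
  = \sum_(b | is_mpart b) c b * ((fmp b)%:R * monsym (ty b) (fun j => zeta ^+ al j)).
  move=> al; have [g hg] := yex al.
  rewrite -(L_trace _ hblam _ hlam tlam _ _ hg) -(L_trace _ hbmu _ hmu tmu _ _ hg).
  transitivity (('chi_(L blam) * 'chi_(L bmu)) g); first by rewrite cfunE.
  rewrite {1}(cfun_sum_cfdot ('chi_(L blam) * 'chi_(L bmu))) sum_cfunE.
  under eq_bigr do rewrite cfunE.
  have hA : forall i, i \in L @: [set b | is_mpart b].
    by move=> i; have [b hb <-] := L_surj i; apply/imsetP; exists b; rewrite ?inE.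
  rewrite (eq_bigl (fun i => i \in L @: [set b | is_mpart b])); last by move=> i; rewrite hA.
  rewrite big_imset /=; last by move=> x y; rewrite !inE => hx hy; apply: L_inj.
  apply: eq_big => [b|b]; first by rewrite inE.
  rewrite inE => hb; have [t1 t2] := ty_ok hb.
  by rewrite (L_trace _ hb _ t1 t2 _ _ hg).
set P := (\sum_(b <- Rs lam) \sum_(c <- Rs mu) condb n nu b c)%N.
set N := (n%:R ^+ k : algC).
have main : D * (P%:R * N) =
    \sum_(b | is_mpart b) c b * (fmp b)%:R * ((ty b == nu)%:R * N).
  rewrite -(S2 hn hzeta) mulr_sumr.
  rewrite (eq_bigr (fun al : {ffun 'I_k -> 'I_n} => \sum_(b | is_mpart b) c b * ((fmp b)%:R * monsym (ty b) (fun j => zeta ^+ al j)) * W zeta nu al)); last first.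
    by move=> al _; rewrite -mulr_suml -key /D; ring.
  rewrite exchange_big /=; apply: eq_bigr => b hb.
  have [t1 t2] := ty_ok hb.
  rewrite -(S1 hn hzeta hnu t1) mulr_sumr; apply: eq_bigr => al _; ring.
have Nnz : N != 0 by rewrite expf_neq0 // pnatr_eq0 -lt0n.
have Dnz : D != 0 by rewrite mulf_neq0 // ?(fnz _ hblam _ hlam tlam) ?(fnz _ hbmu _ hmu tmu).
rewrite (Ncoef_sum hn hlam hmu hnu) -/P.
rewrite (eq_bigl (fun b => is_mpart b && (ty b == nu))); last first.
  move=> b; case hb: (is_mpart b) => //=; have [t1 t2] := ty_ok hb.
  apply/bool_ofP/eqP => [t|<- //].
  exact: type_uniq t1 hnu t2 t.
rewrite -mulr_suml; apply: (mulIf Dnz); rewrite mulfVK //.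
apply: (mulIf Nnz); rewrite (_ : P%:R * D * N = D * (P%:R * N)); last by ring.
rewrite main mulr_suml [in RHS]big_mkcondr /=; apply: eq_bigr => b _.
by case: (ty b == nu); rewrite ?mul1r ?mul0r ?mulr0.
Qed.
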